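(* Assume the setting and Assumptions A2–A3 below. Run the improved Ader method below with \[ \mathcal{H}=\Big\{\eta_i=\frac{2^{i-1}D}{G}\sqrt{\frac{7}{2T}}\ :\ i=1,\dots,N\Big\},\quad N=\Big\lceil\tfrac12\log_2(1+4T/7)\Big\rceil+1,\quad \alpha=\sqrt{2/(TG^2D^2)}. \] Then for any comparator sequence $\mathbf{u}_1,\dots,\mathbf{u}_T\in\mathcal{X}$, with $P_T=\sum_{t=2}^T\|\mathbf{u}_t-\mathbf{u}_{t-1}\|_2$ and $k=\lfloor\frac12\log_2(1+\frac{4P_T}{7D})\rfloor+1$, \[ \sum_{t=1}^T f_t(\mathbf{x}_t)-\sum_{t=1}^T f_t(\mathbf{u}_t)\le\frac{3G}{4}\sqrt{2T(7D^2+4DP_T)}+\frac{GD\sqrt{2T}}{2}\big[1+2\ln(k+1)\big]=O\big(\sqrt{T(1+P_T)}\big). \]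
   Context: Setting: $\mathcal{X}\subseteq\mathbb{R}^d$ nonempty closed convex; $f_1,\dots,f_T:\mathcal{X}\to\mathbb{R}$ convex differentiable, $f_t$ revealed after $\mathbf{x}_t$ is played. A2: $\max_{\mathbf{x}\in\mathcal{X}}\|\nabla f_t(\mathbf{x})\|_2\le G$ for all $t$. A3: $\mathbf{0}\in\mathcal{X}$ and $\max_{\mathbf{x},\mathbf{x}'\in\mathcal{X}}\|\mathbf{x}-\mathbf{x}'\|_2\le D$. Improved Ader: given $\alpha>0$ and $\mathcal{H}=\{\eta_1\le\dots\le\eta_N\}$, one expert per $\eta$ starting at arbitrary $\mathbf{x}_1^\eta\in\mathcal{X}$; initial weights $w_1^{\eta_i}=\frac{C}{i(i+1)}$, $C=1+1/N$. At round $t$: output $\mathbf{x}_t=\sum_\eta w_t^\eta\mathbf{x}_t^\eta$; query $\nabla f_t(\mathbf{x}_t)$; define the surrogate loss $\ell_t(\mathbf{x})=\langle\nabla f_t(\mathbf{x}_t),\mathbf{x}-\mathbf{x}_t\rangle$; update $w_{t+1}^\eta=\frac{w_t^\eta e^{-\alpha\ell_t(\mathbf{x}_t^\eta)}}{\sum_\mu w_t^\mu e^{-\alpha\ell_t(\mathbf{x}_t^\mu)}}$; each expert updates $\mathbf{x}_{t+1}^\eta=\Pi_{\mathcal{X}}[\mathbf{x}_t^\eta-\eta\nabla f_t(\mathbf{x}_t)]$ (Euclidean projection). *)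

(* Defs.v *)
(* classical reals. Vectors of R^d are represented as
   functions nat -> R vanishing at all coordinates >= d (predicate in_Rd). *)
From Stdlib Require Import Reals ZArith.
Open Scope R_scope.

Definition vec := nat -> R.

Fixpoint rsum (n : nat) (f : nat -> R) : R :=
  match n with O => 0 | S m => rsum m f + f m end.

Definition sum1 (n : nat) (f : nat -> R) : R := rsum n (fun i => f (S i)).

Definition in_Rd (d : nat) (v : vec) : Prop := forall i, (d <= i)%nat -> v i = 0.

Definition vzero : vec := fun _ => 0.
Definition vadd (u v : vec) : vec := fun i => u i + v i.
Definition vsub (u v : vec) : vec := fun i => u i - v i.
Definition vscal (a : R) (v : vec) : vec := fun i => a * v i.

Definition dot (d : nat) (u v : vec) : R := rsum d (fun i => u i * v i).
Definition norm (d : nat) (v : vec) : R := sqrt (dot d v v).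

Definition convex_subset (X : vec -> Prop) : Prop :=
  forall x y l, X x -> X y -> 0 <= l <= 1 -> X (vadd (vscal l x) (vscal (1 - l) y)).

Definition closed_in_Rd (d : nat) (X : vec -> Prop) : Prop :=
  forall y, in_Rd d y ->
    (forall eps, 0 < eps -> exists x, X x /\ norm d (vsub x y) < eps) -> X y.

Definition convex_on (X : vec -> Prop) (f : vec -> R) : Prop :=
  forall x y l, X x -> X y -> 0 <= l <= 1 ->
    f (vadd (vscal l x) (vscal (1 - l) y)) <= l * f x + (1 - l) * f y.

Definition has_gradient (d : nat) (X : vec -> Prop) (f : vec -> R) (g x : vec) : Prop :=
  forall eps, 0 < eps -> exists delta, 0 < delta /\
    forall y, X y -> norm d (vsub y x) < delta ->
      Rabs (f y - f x - dot d g (vsub y x)) <= eps * norm d (vsub y x).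

Definition is_proj (d : nat) (X : vec -> Prop) (y p : vec) : Prop :=
  X p /\ forall z, X z -> norm d (vsub p y) <= norm d (vsub z y).

Definition Rfloor (x : R) : Z := Int_part x.
Definition Rceil (x : R) : Z := (- Int_part (- x))%Z.
Definition log2 (x : R) : R := ln x / ln 2.

Definition Nexp (T : nat) : nat :=
  (Z.to_nat (Rceil (/ 2 * log2 (1 + 4 * INR T / 7))) + 1)%nat.

Definition eta (D G : R) (T i : nat) : R :=
  2 ^ (i - 1) * D / G * sqrt (7 / (2 * INR T)).

Definition alpha (D G : R) (T : nat) : R := sqrt (2 / (INR T * G ^ 2 * D ^ 2)).

Definition path_length (d T : nat) (u : nat -> vec) : R :=
  rsum (T - 1) (fun j => norm d (vsub (u (j + 2)%nat) (u (j + 1)%nat))).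

Definition kk (D P : R) : R := IZR (Rfloor (/ 2 * log2 (1 + 4 * P / (7 * D)))) + 1.

Definition surr (d : nat) (g xt y : vec) : R := dot d g (vsub y xt).

(* Main.v *)
Require Import Defs.
From Stdlib Require Import Reals ZArith Lra Lia Psatz FunctionalExtensionality.
From Coquelicot Require Coquelicot.
Open Scope R_scope.

Lemma rsum_ext n f g : (forall i, (i < n)%nat -> f i = g i) -> rsum n f = rsum n g.
Proof. induction n; simpl; intros H; [auto|]. rewrite IHn by (intros; apply H; lia). rewrite H by lia. auto. Qed.
Lemma rsum_plus n f g : rsum n (fun i => f i + g i) = rsum n f + rsum n g.
Proof. induction n; simpl; lra. Qed.
Lemma rsum_minus n f g : rsum n (fun i => f i - g i) = rsum n f - rsum n g.
Proof. induction n; simpl; lra. Qed.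
Lemma rsum_scal n c f : rsum n (fun i => c * f i) = c * rsum n f.
Proof. induction n; simpl; [ring|rewrite IHn; ring]. Qed.
Lemma rsum_opp n f : rsum n (fun i => - f i) = - rsum n f.
Proof. induction n; simpl; [ring|rewrite IHn; ring]. Qed.
Lemma rsum_zero n : rsum n (fun _ => 0) = 0.
Proof. induction n; simpl; lra. Qed.
Lemma rsum_le n f g : (forall i, (i < n)%nat -> f i <= g i) -> rsum n f <= rsum n g.
Proof. induction n; simpl; intros H; [lra|]. pose proof (H n ltac:(lia)). pose proof (IHn ltac:(intros; apply H; lia)). lra. Qed.
Lemma rsum_nonneg n f : (forall i, (i < n)%nat -> 0 <= f i) -> 0 <= rsum n f.
Proof. intros H. rewrite <- (rsum_zero n). apply rsum_le. auto. Qed.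
Lemma rsum_swap n m F : rsum n (fun i => rsum m (fun j => F i j)) = rsum m (fun j => rsum n (fun i => F i j)).
Proof. induction n; simpl. - rewrite rsum_zero; auto. - rewrite IHn, <- rsum_plus. reflexivity. Qed.

Ltac lin := unfold dot; repeat (rewrite <- rsum_scal || rewrite <- rsum_plus || rewrite <- rsum_minus || rewrite <- rsum_opp);
  apply rsum_ext; intros; cbv beta; unfold vsub, vadd, vscal; ring.

Lemma dot_sym d u v : dot d u v = dot d v u.
Proof. lin. Qed.
Lemma N2_nonneg d v : 0 <= dot d v v.
Proof. apply rsum_nonneg; intros; nra. Qed.
Lemma norm_nonneg d v : 0 <= norm d v.
Proof. apply sqrt_pos. Qed.
Lemma norm_sq d v : norm d v * norm d v = dot d v v.
Proof. apply sqrt_sqrt, N2_nonneg. Qed.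

Lemma CS d u v : dot d u v <= norm d u * norm d v.
Proof.
  assert (Q : forall s t, 0 <= s^2 * dot d u u - 2 * s * t * dot d u v + t^2 * dot d v v).
  { intros s t. replace (s^2 * dot d u u - 2 * s * t * dot d u v + t^2 * dot d v v)
      with (dot d (vsub (vscal s u) (vscal t v)) (vsub (vscal s u) (vscal t v))) by lin.
    apply N2_nonneg. }
  pose proof (norm_sq d u) as Hu. pose proof (norm_sq d v) as Hv.
  pose proof (norm_nonneg d u). pose proof (norm_nonneg d v).
  set (A := norm d u) in *. set (B := norm d v) in *. set (p := dot d u v) in *.
  set (a := dot d u u) in *. set (b := dot d v v) in *.
  destruct (Req_dec A 0) as [HA|HA].
  - rewrite HA, Rmult_0_l. destruct (Rle_dec p 0); auto.
    exfalso. pose proof (Q 1 (p / (b + 1))). assert (a = 0) by nra.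
    assert (0 <= b) by nra.
    assert (0 <= - 2 * (p / (b+1)) * p + (p/(b+1))^2 * b) by nra.
    assert (K: 0 <= (- 2 * (p / (b+1)) * p + (p/(b+1))^2 * b) * (b+1)^2) by (apply Rmult_le_pos; nra).
    replace ((- 2 * (p / (b+1)) * p + (p/(b+1))^2 * b) * (b+1)^2) with (- p^2 * (b + 2)) in K by (field; lra).
    nra.
  - destruct (Req_dec B 0) as [HB|HB].
    + rewrite HB, Rmult_0_r. destruct (Rle_dec p 0); auto.
      exfalso. pose proof (Q (p / (a + 1)) 1). assert (b = 0) by nra.
      assert (0 <= a) by nra.
      assert (0 <= (p / (a+1))^2 * a - 2 * (p / (a+1)) * p) by nra.
      assert (K: 0 <= ((p / (a+1))^2 * a - 2 * (p / (a+1)) * p) * (a+1)^2) by (apply Rmult_le_pos; nra).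
      replace (((p / (a+1))^2 * a - 2 * (p / (a+1)) * p) * (a+1)^2) with (- p^2 * (a + 2)) in K by (field; lra).
      nra.
    + pose proof (Q B A). assert (0 < A * B) by (apply Rmult_lt_0_compat; lra).
      assert (A * B * p <= A * B * (A * B)) by nra.
      apply Rmult_le_reg_l with (A * B); auto.
Qed.

Lemma CS_abs d u v : Rabs (dot d u v) <= norm d u * norm d v.
Proof.
  apply Rabs_le. split.
  - assert (dot d u (vscal (-1) v) = - dot d u v) by lin.
    assert (norm d (vscal (-1) v) = norm d v).
    { unfold norm. f_equal. lin. }
    pose proof (CS d u (vscal (-1) v)) as K. rewrite H0 in K. lra.
  - apply CS.
Qed.



Module MyCalc.
Import Coquelicot.Coquelicot.
Lemma m_nonneg (y : R) : 0 <= y -> 0 <= y * (exp y + exp (-y)) - exp y + exp (- y).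
Proof.
  intros Hy.
  set (m := fun y => y * (exp y + exp (-y)) - exp y + exp (- y)).
  change (0 <= m y).
  destruct (MVT_gen m 0 y (fun c => c * (exp c - exp (-c)))) as [c [Hc Heq]].
  - intros z _. unfold m. auto_derive. auto. ring.
  - intros z _. apply (continuity_pt_filterlim m z). apply (ex_derive_continuous m z). unfold m; auto_derive; auto.
  - rewrite Rmin_left in Hc by lra. rewrite Rmax_right in Hc by lra.
    assert (m 0 = 0) by (unfold m; rewrite Ropp_0; ring).
    assert (exp (-c) <= exp c).
    { destruct (Req_dec c 0). subst; rewrite Ropp_0; lra. left; apply exp_increasing; lra. }
    assert (0 <= c * (exp c - exp (- c)) * (y - 0)) by (apply Rmult_le_pos; [apply Rmult_le_pos|]; lra).
    lra.
Qed.

Lemma cosh_le (s : R) : 0 <= s -> exp s + exp (- s) <= 2 * exp (s ^ 2 / 2).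
Proof.
  intros Hs.
  set (q := fun y => (exp y + exp (-y)) * exp (- (y ^ 2 / 2))).
  assert (q s <= q 0).
  { destruct (MVT_gen q 0 s (fun c => - exp (- (c^2/2)) * (c * (exp c + exp (-c)) - exp c + exp (- c)))) as [c [Hc Heq]].
    - intros z _. unfold q. auto_derive. auto. replace (z*(z*1)*/2) with (z^2/2) by (unfold Rdiv; ring). set (a := exp (- (z^2/2))). set (b := exp z). set (c := exp (-z)). field.
    - intros z _. apply (continuity_pt_filterlim q z). apply (ex_derive_continuous q z). unfold q; auto_derive; auto.
    - rewrite Rmin_left in Hc by lra. rewrite Rmax_right in Hc by lra.
      pose proof (m_nonneg c ltac:(lra)). pose proof (exp_pos (- (c^2/2))).
      assert (0 <= exp (- (c^2/2)) * (c * (exp c + exp (-c)) - exp c + exp (- c)) * (s - 0)) by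
        (apply Rmult_le_pos; [apply Rmult_le_pos|]; lra).
      lra. }
  unfold q in H. replace (0 ^ 2 / 2) with 0 in H by field. rewrite Ropp_0, exp_0 in H.
  pose proof (exp_pos (s^2/2)).
  rewrite (exp_Ropp (s^2/2)) in H.
  set (E := exp (s^2/2)) in *.
  assert (exp s + exp (-s) = ((exp s + exp (-s)) * / E) * E) by (field; lra).
  rewrite H1. apply Rmult_le_compat_r; lra.
Qed.
End MyCalc.
Lemma norm_le_N2 d a b : norm d a <= norm d b -> dot d a a <= dot d b b.
Proof. intros H. apply sqrt_le_0; auto using N2_nonneg. Qed.
Lemma N2_le_norm d a c : 0 <= c -> dot d a a <= c^2 -> norm d a <= c.
Proof. intros Hc H. unfold norm. rewrite <- (sqrt_pow2 c Hc). apply sqrt_le_1_alt. auto. Qed.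
Lemma norm_le_N2' d a c : norm d a <= c -> dot d a a <= c^2.
Proof. intros H. pose proof (norm_sq d a). pose proof (norm_nonneg d a). nra. Qed.

Lemma proj_contract d X y p u : convex_subset X -> is_proj d X y p -> X u ->
  dot d (vsub p u) (vsub p u) <= dot d (vsub y u) (vsub y u).
Proof.
  intros Hc [Hp Hmin] Hu.
  set (A := vsub p y). set (B := vsub u p).
  assert (Hl : forall l, 0 < l <= 1 -> 0 <= 2 * l * dot d A B + l^2 * dot d B B).
  { intros l Hl. specialize (Hmin (vadd (vscal l u) (vscal (1 - l) p)) (Hc u p l Hu Hp ltac:(lra))).
    apply norm_le_N2 in Hmin.
    replace (dot d (vsub (vadd (vscal l u) (vscal (1 - l) p)) y) (vsub (vadd (vscal l u) (vscal (1 - l) p)) y))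
      with (dot d A A + 2 * l * dot d A B + l^2 * dot d B B) in Hmin by (unfold A, B; lin).
    unfold A in *. lra. }
  assert (HAB : 0 <= dot d A B).
  { destruct (Rle_dec 0 (dot d A B)) as [h|h]; auto. exfalso.
    set (k := - dot d A B). set (nb := dot d B B). assert (0 < k) by (unfold k; lra).
    assert (0 <= nb) by apply N2_nonneg.
    specialize (Hl (k / (nb + k))).
    assert (0 < k / (nb + k) <= 1).
    { split. apply Rdiv_lt_0_compat; lra. apply Rmult_le_reg_r with (nb + k). lra.
      field_simplify; lra. }
    specialize (Hl H1). fold nb in Hl. replace (dot d A B) with (-k) in Hl by (unfold k; ring).
    assert (K : 0 <= (2 * (k / (nb + k)) * - k + (k / (nb + k)) ^ 2 * nb) * (nb + k)^2) by (apply Rmult_le_pos; nra).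
    replace ((2 * (k / (nb + k)) * - k + (k / (nb + k)) ^ 2 * nb) * (nb + k)^2) with (- k^2 * (nb + 2 * k)) in K by (field; lra).
    assert (0 < k^2 * (nb + 2*k)) by (apply Rmult_lt_0_compat; nra). lra. }
  replace (dot d (vsub y u) (vsub y u)) with (dot d A A + 2 * dot d A B + dot d B B) by (unfold A, B; lin).
  replace (dot d (vsub p u) (vsub p u)) with (dot d B B) by (unfold B; lin).
  pose proof (N2_nonneg d A). lra.
Qed.

Lemma first_order d X f g x y : convex_subset X -> convex_on X f -> has_gradient d X f g x -> X x -> X y ->
  f x + dot d g (vsub y x) <= f y.
Proof.
  intros Hcs Hcv Hg Hx Hy.
  destruct (Rle_dec (f x + dot d g (vsub y x)) (f y)) as [h|h]; auto. exfalso.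
  set (gap := f x + dot d g (vsub y x) - f y). assert (0 < gap) by (unfold gap; lra).
  set (n := norm d (vsub y x)). assert (0 <= n) by apply norm_nonneg.
  destruct (Hg (gap / (2 * (n + 1)))) as [del [Hdel Hd]].
  { apply Rdiv_lt_0_compat; lra. }
  set (l := del / (del + n + 1)).
  assert (Hl : 0 < l < 1).
  { unfold l. split. apply Rdiv_lt_0_compat; lra. apply Rmult_lt_reg_r with (del + n + 1). lra. field_simplify; lra. }
  set (z := vadd (vscal l y) (vscal (1 - l) x)).
  assert (Xz : X z) by (apply Hcs; auto; lra).
  assert (Hzn : norm d (vsub z x) = l * n).
  { unfold norm, n. replace (dot d (vsub z x) (vsub z x)) with (l^2 * dot d (vsub y x) (vsub y x)) by (unfold z; lin).
    rewrite sqrt_mult_alt by nra. rewrite sqrt_pow2 by lra. auto. }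
  assert (Hlt : norm d (vsub z x) < del).
  { rewrite Hzn. unfold l. apply Rmult_lt_reg_r with (del + n + 1). lra. field_simplify; nra. }
  specialize (Hd z Xz Hlt). rewrite Hzn in Hd.
  replace (dot d g (vsub z x)) with (l * dot d g (vsub y x)) in Hd by (unfold z; lin).
  pose proof (Hcv y x l Hy Hx ltac:(lra)) as Hc. fold z in Hc.
  pose proof (Rle_abs (- (f z - f x - l * dot d g (vsub y x)))) as Hd'. rewrite Rabs_Ropp in Hd'.
  assert (l * (dot d g (vsub y x)) - gap / (2 * (n + 1)) * (l * n) <= l * (f y - f x)) by (clear -Hd Hd' Hc Hl; nra).
  assert (dot d g (vsub y x) - gap / (2 * (n + 1)) * n <= f y - f x).
  { apply Rmult_le_reg_l with l. lra. nra. }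
  assert (gap / (2 * (n + 1)) * n < gap).
  { apply Rmult_lt_reg_r with (2 * (n+1)). lra. field_simplify; nra. }
  unfold gap in *. lra.
Qed.

Lemma sum1_S n f : sum1 (S n) f = sum1 n f + f (S n).
Proof. reflexivity. Qed.
Lemma sum1_pos n f : (1 <= n)%nat -> (forall i, (1 <= i <= n)%nat -> 0 < f i) -> 0 < sum1 n f.
Proof.
  intros Hn H. destruct n. lia. rewrite sum1_S.
  assert (0 <= sum1 n f). { apply rsum_nonneg. intros. left. apply H. lia. }
  pose proof (H (S n) ltac:(lia)). lra.
Qed.

Lemma conv_comb X : convex_subset X -> forall n, (1 <= n)%nat -> forall (lam : nat -> R) (p : nat -> vec),
  (forall i, (1 <= i <= n)%nat -> 0 < lam i) -> (forall i, (1 <= i <= n)%nat -> X (p i)) ->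
  X (fun j => sum1 n (fun i => lam i * p i j) / sum1 n lam).
Proof.
  intros Hc n Hn. induction n as [|n IH]. lia. intros lam p Hl Hp.
  destruct (Nat.eq_dec n 0) as [->|Hn0].
  - replace (fun j => sum1 1 (fun i => lam i * p i j) / sum1 1 lam) with (p 1%nat).
    apply Hp; lia. apply functional_extensionality. intros j. unfold sum1; simpl.
    pose proof (Hl 1%nat ltac:(lia)). field. lra.
  - pose proof (sum1_pos n lam ltac:(lia) ltac:(intros; apply Hl; lia)) as HS.
    pose proof (Hl (S n) ltac:(lia)) as Hl1.
    set (S0 := sum1 n lam) in *.
    set (q := fun j => sum1 n (fun i => lam i * p i j) / S0).
    assert (Xq : X q) by (apply IH; [lia| intros; apply Hl; lia | intros; apply Hp; lia]).
    set (c := S0 / (S0 + lam (S n))).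
    assert (0 <= c <= 1).
    { unfold c. split. apply Rmult_le_pos; [lra| left; apply Rinv_0_lt_compat; lra]. apply Rmult_le_reg_r with (S0 + lam (S n)). lra. field_simplify; lra. }
    replace (fun j => sum1 (S n) (fun i => lam i * p i j) / sum1 (S n) lam) with (vadd (vscal c q) (vscal (1 - c) (p (S n)))).
    { apply Hc; [exact Xq| apply Hp; lia| exact H]. }
    apply functional_extensionality. intros j. unfold vadd, vscal, c, q. rewrite !sum1_S. fold S0. field. lra.
Qed.
Lemma exp_convex l a b : 0 <= l <= 1 -> exp (l * a + (1 - l) * b) <= l * exp a + (1 - l) * exp b.
Proof.
  intros Hl. set (m := l * a + (1 - l) * b).
  assert (exp a = exp m * exp (a - m)) by (rewrite <- exp_plus; f_equal; ring).
  assert (exp b = exp m * exp (b - m)) by (rewrite <- exp_plus; f_equal; ring).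
  pose proof (exp_ineq1_le (a - m)). pose proof (exp_ineq1_le (b - m)). pose proof (exp_pos m).
  rewrite H, H0.
  assert (l * (exp m * exp (a - m)) >= l * (exp m * (1 + (a - m)))) by (apply Rle_ge, Rmult_le_compat_l; [lra| apply Rmult_le_compat_l; lra]).
  assert ((1-l) * (exp m * exp (b - m)) >= (1-l) * (exp m * (1 + (b - m)))) by (apply Rle_ge, Rmult_le_compat_l; [lra| apply Rmult_le_compat_l; lra]).
  assert (l * (exp m * (1 + (a - m))) + (1-l) * (exp m * (1 + (b - m))) = exp m) by (unfold m; ring).
  lra.
Qed.

Lemma hedge_step N (p y : nat -> R) c a : 0 < c -> 0 <= a ->
  (forall i, (1 <= i <= N)%nat -> 0 <= p i) -> sum1 N p = 1 ->
  (forall i, (1 <= i <= N)%nat -> - c <= y i <= c) -> sum1 N (fun i => p i * y i) = 0 ->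
  sum1 N (fun i => p i * exp (- a * y i)) <= exp (a ^ 2 * c ^ 2 / 2).
Proof.
  intros Hc Ha Hp Hs Hy H0.
  set (E := exp (a * c)). set (E' := exp (- (a * c))).
  apply Rle_trans with (sum1 N (fun i => (E + E') / 2 * p i + (E' - E) / (2 * c) * (p i * y i))).
  { apply rsum_le. intros i Hi. cbv beta. specialize (Hp (S i) ltac:(lia)). specialize (Hy (S i) ltac:(lia)).
    set (l := (c - y (S i)) / (2 * c)).
    assert (0 <= l <= 1).
    { unfold l. split. apply Rmult_le_pos; [lra| left; apply Rinv_0_lt_compat; lra].
      apply Rmult_le_reg_r with (2 * c). lra. field_simplify; lra. }
    pose proof (exp_convex l (a * c) (- (a * c)) H).
    replace (l * (a * c) + (1 - l) * - (a * c)) with (- a * y (S i)) in H1 by (unfold l; field; lra).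
    fold E E' in H1.
    replace ((E + E') / 2 * p (S i) + (E' - E) / (2 * c) * (p (S i) * y (S i))) with (p (S i) * (l * E + (1 - l) * E')) by (unfold l; field; lra).
    apply Rmult_le_compat_l; lra. }
  unfold sum1 in *. rewrite rsum_plus, rsum_scal, rsum_scal, Hs, H0.
  pose proof (MyCalc.cosh_le (a * c) ltac:(nra)). fold E E' in H.
  replace ((a * c) ^ 2 / 2) with (a ^ 2 * c ^ 2 / 2) in H by field. lra.
Qed.

Lemma rsum_S n f : rsum (S n) f = rsum n f + f n.
Proof. reflexivity. Qed.
Lemma w1_sum n : rsum n (fun i => / (INR (S i) * (INR (S i) + 1))) = INR n / (INR n + 1).
Proof.
  induction n. simpl. field. rewrite rsum_S, IHn. cbv beta. rewrite !S_INR. pose proof (pos_INR n). field. lra.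
Qed.
Lemma expert_final (T G D P q : R) : 1 <= T -> 0 < G -> 0 < D -> 0 <= P -> 0 < q ->
  q^2 <= 1 + 4 * P / (7 * D) -> 1 + 4 * P / (7 * D) < 4 * q^2 ->
  let eta := q * D / G * sqrt (7 / (2 * T)) in
  (D^2 + 2 * D * P) / (2 * eta) + eta * T * G^2 / 2 <= 3 * G / 4 * sqrt (2 * T * (7 * D ^ 2 + 4 * D * P)).
Proof.
  intros HT HG HD HP Hq H1 H2 eta.
  set (A := 7 * D^2 + 4 * D * P).
  assert (HA : A = 7 * D^2 * (1 + 4 * P / (7 * D))) by (unfold A; field; lra).
  set (E := sqrt (2 * T * A)).
  assert (HA0 : 0 <= A) by (unfold A; assert (0 <= D * P) by nra; nra).
  assert (HE2 : E * E = 2 * T * A) by (apply sqrt_sqrt; apply Rmult_le_pos; lra).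
  assert (HE : 0 <= E) by apply sqrt_pos.
  set (s := sqrt (7 / (2 * T))).
  assert (Hs2 : s * s = 7 / (2 * T)) by (apply sqrt_sqrt; apply Rmult_le_pos; [lra|left; apply Rinv_0_lt_compat; lra]).
  assert (Hs : 0 < s) by (apply sqrt_lt_R0; apply Rmult_lt_0_compat; [lra| apply Rinv_0_lt_compat; lra]).
  assert (Heta : 0 < eta) by (unfold eta; apply Rmult_lt_0_compat; [apply Rmult_lt_0_compat; [nra| apply Rinv_0_lt_compat; lra] | exact Hs]).
  set (y := 2 * T * G * eta).
  assert (Hy2 : y * y = 14 * T * q^2 * D^2).
  { unfold y, eta. fold s. replace (2 * T * G * (q * D / G * s) * (2 * T * G * (q * D / G * s))) with (4 * T * T * q^2 * D^2 * (s * s)) by (field; lra).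
    rewrite Hs2. field. lra. }
  assert (HEy2 : E * E = 14 * T * D^2 * (1 + 4 * P / (7 * D))) by (rewrite HE2, HA; ring).
  assert (Hy : 0 < y) by (unfold y; assert (0 < 2 * T * G) by nra; clearbody eta; nra).
  assert (yE : y <= E).
  { destruct (Rle_dec y E); auto. assert (E * E < y * y) by nra. assert (0 <= 14 * T * D^2) by nra. nra. }
  assert (Ey : E <= 2 * y).
  { destruct (Rle_dec E (2 * y)); auto. assert (4 * (y * y) < E * E) by nra. assert (0 < 14 * T * D^2) by (repeat apply Rmult_lt_0_compat; nra). nra. }
  assert (B1 : (D^2 + 2 * D * P) / (2 * eta) <= G * E / 2).
  { apply Rmult_le_reg_r with (2 * eta). lra. field_simplify; [|lra].
    assert (D^2 + 2 * D * P <= A / 2) by (unfold A; nra).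
    assert (A = E * E / (2 * T)) by (rewrite HE2; field; lra).
    assert (E * E <= E * (2 * y)) by nra. unfold y in *.
    assert (A <= 2 * G * eta * E). { rewrite H0. apply Rmult_le_reg_r with (2 * T). lra. field_simplify; nra. }
    nra. }
  assert (B2 : eta * T * G^2 / 2 <= G * E / 4).
  { unfold y in yE. nra. }
  fold E. lra.
Qed.
Lemma ln_le x y : 0 < x -> x <= y -> ln x <= ln y.
Proof. intros Hx Hxy. destruct (Req_dec x y). subst; lra. left; apply ln_increasing; lra. Qed.
Lemma ln2_pos : 0 < ln 2.
Proof. rewrite <- ln_1. apply ln_increasing; lra. Qed.

Lemma index_k (T : nat) (D P : R) : (1 <= T)%nat -> 0 < D -> 0 <= P -> P <= INR T * D ->
  exists k : nat, (1 <= k <= Nexp T)%nat /\ INR k = kk D P /\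
   (2 ^ (k - 1)) ^ 2 <= 1 + 4 * P / (7 * D) < 4 * (2 ^ (k - 1)) ^ 2.
Proof.
  intros HT HD HP HPT.
  pose proof ln2_pos as L2.
  set (r := 1 + 4 * P / (7 * D)).
  assert (Hr : 1 <= r) by (unfold r; assert (0 <= 4 * P / (7 * D)) by (apply Rmult_le_pos; [lra| left; apply Rinv_0_lt_compat; lra]); lra).
  assert (Hlr : 0 <= ln r) by (rewrite <- ln_1; apply ln_le; lra).
  set (z := / 2 * log2 r).
  assert (Hz : ln r = 2 * z * ln 2) by (unfold z, log2; field; lra).
  assert (Hz0 : 0 <= z) by (unfold z, log2; apply Rmult_le_pos; [lra| apply Rmult_le_pos; [lra| left; apply Rinv_0_lt_compat; lra]]).
  set (F := Rfloor z).
  destruct (base_Int_part z) as [F1 F2]. fold (Rfloor z) in F1, F2. fold F in F1, F2.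
  assert (F0 : (0 <= F)%Z). { assert (-1 < F)%Z by (apply lt_IZR; simpl; lra). lia. }
  set (m := Z.to_nat F).
  assert (Hm : INR m = IZR F) by (unfold m; rewrite INR_IZR_INZ, Z2Nat.id; auto).
  exists (S m). split; [split|split].
  - lia.
  - unfold Nexp. set (z' := / 2 * log2 (1 + 4 * INR T / 7)).
    assert (r <= 1 + 4 * INR T / 7).
    { unfold r. assert (P / D <= INR T) by (apply Rmult_le_reg_r with D; [lra| field_simplify; lra]).
      assert (4 * P / (7 * D) = 4 / 7 * (P / D)) by (field; lra). lra. }
    assert (z <= z').
    { unfold z, z', log2. apply Rmult_le_compat_l; [lra|]. apply Rmult_le_compat_r. left; apply Rinv_0_lt_compat; lra.
      apply ln_le; lra. }
    destruct (base_Int_part (- z')) as [C1 C2].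
    assert (IZR F <= IZR (Rceil z')) by (unfold Rceil; rewrite opp_IZR; lra).
    apply le_IZR in H1. unfold m. lia.
  - rewrite S_INR, Hm. unfold kk. fold r z. reflexivity.
  - replace (S m - 1)%nat with m by lia. fold r.
    assert (Hq : 0 < 2 ^ m) by (apply pow_lt; lra).
    assert (Lq : ln (2 ^ m) = INR m * ln 2) by (apply ln_pow; lra).
    assert (Lq2 : ln ((2 ^ m) ^ 2) = 2 * INR m * ln 2) by (rewrite ln_pow by lra; rewrite Lq; simpl; ring).
    split.
    + destruct (Rle_dec ((2 ^ m) ^ 2) r) as [h|h]; auto. exfalso.
      assert (ln r < ln ((2 ^ m) ^ 2)) by (apply ln_increasing; lra).
      rewrite Lq2, Hz, Hm in H. nra.
    + apply ln_lt_inv. lra. nra.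
      rewrite ln_mult by nra. rewrite Lq2. replace 4 with (2 ^ 2) by ring. rewrite ln_pow by lra.
      rewrite Hz, Hm. simpl. nra.
Qed.
Lemma sum1_nonneg n f : (forall i, (1 <= i <= n)%nat -> 0 <= f i) -> 0 <= sum1 n f.
Proof. intros H. apply rsum_nonneg. intros. apply H. lia. Qed.
Lemma sum1_ge_term n f k : (forall i, (1 <= i <= n)%nat -> 0 <= f i) -> (1 <= k <= n)%nat -> f k <= sum1 n f.
Proof.
  induction n; intros H Hk. lia. rewrite sum1_S.
  destruct (Nat.eq_dec k (S n)) as [->|Hne].
  - pose proof (sum1_nonneg n f ltac:(intros; apply H; lia)). lra.
  - pose proof (IHn ltac:(intros; apply H; lia) ltac:(lia)). pose proof (H (S n) ltac:(lia)). lra.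
Qed.
Lemma norm_vsub_sym d a b : norm d (vsub a b) = norm d (vsub b a).
Proof. unfold norm. f_equal. lin. Qed.
Lemma sqrt_pos_eq (a b : R) : 0 <= a -> 0 <= b -> a * a = b * b -> a = b.
Proof. intros. nra. Qed.
Lemma rsum_const n c : rsum n (fun _ => c) = INR n * c.
Proof. induction n. simpl; ring. rewrite rsum_S, IHn, S_INR. ring. Qed.

Theorem theorem4
  (d : nat) (X : vec -> Prop) (T : nat) (G D : R)
  (f : nat -> vec -> R) (grad : nat -> vec -> vec)
  (xe : nat -> nat -> vec) (w : nat -> nat -> R) (x : nat -> vec)
  (u : nat -> vec) :
  (1 <= T)%nat -> 0 < G -> 0 < D ->
  (* setting: X nonempty closed convex subset of R^d *)
  (forall z, X z -> in_Rd d z) ->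
  (exists z, X z) ->
  closed_in_Rd d X ->
  convex_subset X ->
  (* f_t convex, differentiable with gradient grad t *)
  (forall t, (1 <= t <= T)%nat -> convex_on X (f t)) ->
  (forall t z, (1 <= t <= T)%nat -> X z ->
     in_Rd d (grad t z) /\ has_gradient d X (f t) (grad t z) z) ->
  (* A2 *)
  (forall t z, (1 <= t <= T)%nat -> X z -> norm d (grad t z) <= G) ->
  (* A3 *)
  X vzero ->
  (forall z z', X z -> X z' -> norm d (vsub z z') <= D) ->
  (* improved Ader with the given H, N, alpha *)
  (forall i, (1 <= i <= Nexp T)%nat -> X (xe 1%nat i)) ->
  (forall i, (1 <= i <= Nexp T)%nat ->
     w 1%nat i = (1 + / INR (Nexp T)) / (INR i * (INR i + 1))) ->
  (forall t j, (1 <= t <= T)%nat ->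
     x t j = sum1 (Nexp T) (fun i => w t i * xe t i j)) ->
  (forall t i, (1 <= t <= T)%nat -> (1 <= i <= Nexp T)%nat ->
     w (S t) i =
       w t i * exp (- alpha D G T * surr d (grad t (x t)) (x t) (xe t i)) /
       sum1 (Nexp T) (fun m =>
         w t m * exp (- alpha D G T * surr d (grad t (x t)) (x t) (xe t m)))) ->
  (forall t i, (1 <= t <= T)%nat -> (1 <= i <= Nexp T)%nat ->
     is_proj d X (vsub (xe t i) (vscal (eta D G T i) (grad t (x t)))) (xe (S t) i)) ->
  (* comparator sequence *)
  (forall t, (1 <= t <= T)%nat -> X (u t)) ->
  sum1 T (fun t => f t (x t)) - sum1 T (fun t => f t (u t)) <=
    3 * G / 4 * sqrt (2 * INR T * (7 * D ^ 2 + 4 * D * path_length d T u))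
    + G * D * sqrt (2 * INR T) / 2
      * (1 + 2 * ln (kk D (path_length d T u) + 1)).
Proof.
  intros HT HG HD _ _ _ Hcs Hconv Hgrad HGb _ HDb Hxe1 Hw1 Hx Hw Hproj Hu.
  set (N := Nexp T) in *.
  assert (HN : (1 <= N)%nat) by (unfold N, Nexp; lia).
  set (a := alpha D G T) in *.
  set (l := fun t i => surr d (grad t (x t)) (x t) (xe t i)) in *.
  assert (HW : forall t, (1 <= t <= S T)%nat -> (forall i, (1 <= i <= N)%nat -> 0 < w t i) /\ sum1 N (w t) = 1).
  { intros t. induction t as [|t IH]; intros Ht. lia.
    destruct t as [|t].
    - split.
      + intros i Hi. rewrite Hw1 by auto. pose proof (pos_INR N). assert (1 <= INR i) by (apply (le_INR 1); lia).
        assert (0 < INR N) by (apply (lt_INR 0); lia).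
        apply Rmult_lt_0_compat. assert (0 < / INR N) by (apply Rinv_0_lt_compat; lra). lra.
        apply Rinv_0_lt_compat. nra.
      + unfold sum1. rewrite (rsum_ext N _ (fun i => (1 + / INR N) * / (INR (S i) * (INR (S i) + 1)))).
        rewrite rsum_scal, w1_sum. assert (0 < INR N) by (apply (lt_INR 0); lia). field. lra.
        intros i Hi. rewrite Hw1 by lia. reflexivity.
    - destruct (IH ltac:(lia)) as [Hp Hs].
      set (Z := sum1 N (fun m => w (S t) m * exp (- a * l (S t) m))).
      assert (HZ : 0 < Z) by (apply sum1_pos; auto; intros; apply Rmult_lt_0_compat; [apply Hp; auto| apply exp_pos]).
      split.
      + intros i Hi. rewrite Hw by (auto; lia). fold l. fold Z.
        apply Rdiv_lt_0_compat; auto. apply Rmult_lt_0_compat; [apply Hp; auto| apply exp_pos].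
      + unfold sum1. rewrite (rsum_ext N _ (fun i => / Z * (w (S t) (S i) * exp (- a * l (S t) (S i))))).
        rewrite rsum_scal. fold (sum1 N (fun m => w (S t) m * exp (- a * l (S t) m))). fold Z. field. lra.
        intros i Hi. rewrite Hw by lia. unfold Z, l. unfold Rdiv. ring. }
  assert (HXE : forall t, (1 <= t <= S T)%nat -> forall i, (1 <= i <= N)%nat -> X (xe t i)).
  { intros t. induction t as [|t IH]; intros Ht i Hi. lia.
    destruct t as [|t]. apply Hxe1; auto.
    destruct (Hproj (S t) i ltac:(lia) Hi) as [Hp _]. exact Hp. }
  assert (HXX : forall t, (1 <= t <= T)%nat -> X (x t)).
  { intros t Ht. destruct (HW t ltac:(lia)) as [Hp Hs].
    pose proof (conv_comb X Hcs N HN (w t) (xe t) Hp (HXE t ltac:(lia))) as Hc.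
    replace (x t) with (fun j => sum1 N (fun i => w t i * xe t i j) / sum1 N (w t)). exact Hc.
    apply functional_extensionality. intros j. rewrite Hs, Hx by auto. field. }
  set (g := fun t => grad t (x t)).
  assert (HLb : forall t i, (1 <= t <= T)%nat -> (1 <= i <= N)%nat -> - (G * D) <= l t i <= G * D).
  { intros t i Ht Hi. unfold l, surr.
    pose proof (CS_abs d (grad t (x t)) (vsub (xe t i) (x t))) as K.
    pose proof (HGb t (x t) Ht (HXX t Ht)). pose proof (HDb _ _ (HXE t ltac:(lia) i Hi) (HXX t Ht)).
    pose proof (norm_nonneg d (grad t (x t))). pose proof (norm_nonneg d (vsub (xe t i) (x t))).
    assert (norm d (grad t (x t)) * norm d (vsub (xe t i) (x t)) <= G * D) by (apply Rmult_le_compat; auto).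
    pose proof (Rle_abs (- dot d (grad t (x t)) (vsub (xe t i) (x t)))) as K2. rewrite Rabs_Ropp in K2.
    pose proof (Rle_abs (dot d (grad t (x t)) (vsub (xe t i) (x t)))) as K3. split; lra. }
  assert (HL0 : forall t, (1 <= t <= T)%nat -> sum1 N (fun i => w t i * l t i) = 0).
  { intros t Ht. destruct (HW t ltac:(lia)) as [_ Hs]. unfold sum1, l, surr, dot.
    rewrite (rsum_ext N _ (fun i => rsum d (fun j => w t (S i) * (grad t (x t) j * vsub (xe t (S i)) (x t) j)))).
    2: { intros i Hi. rewrite <- rsum_scal. reflexivity. }
    rewrite rsum_swap. rewrite <- (rsum_zero d). apply rsum_ext. intros j Hj.
    rewrite (rsum_ext N _ (fun i => grad t (x t) j * (w t (S i) * xe t (S i) j) - (grad t (x t) j * x t j) * w t (S i))).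
    2: { intros i Hi. unfold vsub. ring. }
    rewrite rsum_minus, !rsum_scal. unfold sum1 in Hs, Hx. rewrite <- Hx by auto. rewrite Hs. ring. }
  set (P := path_length d T u).
  assert (HP0 : 0 <= P) by (apply rsum_nonneg; intros; apply norm_nonneg).
  assert (HPT : P <= INR T * D).
  { apply Rle_trans with (rsum (T - 1) (fun _ => D)).
    apply rsum_le. intros j Hj. apply HDb; apply Hu; lia.
    rewrite rsum_const. assert (INR (T - 1) <= INR T) by (apply le_INR; lia). nra. }
  destruct (index_k T D P HT HD HP0 HPT) as [k [Hk [Hkk Hq]]].
  fold P. rewrite <- Hkk.
  assert (Ha2 : a * a = 2 / (INR T * G ^ 2 * D ^ 2)).
  { unfold a, alpha. apply sqrt_sqrt. assert (1 <= INR T) by (apply (le_INR 1); lia).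
    apply Rmult_le_pos; [lra| left; apply Rinv_0_lt_compat; assert (0 < G^2 * D^2) by (apply Rmult_lt_0_compat; nra); nra]. }
  assert (HTr : 1 <= INR T) by (apply (le_INR 1); lia).
  assert (Ha : 0 < a).
  { unfold a, alpha. apply sqrt_lt_R0. apply Rdiv_lt_0_compat; [lra|]. assert (0 < G^2 * D^2) by (apply Rmult_lt_0_compat; nra); nra. }
  set (s := sqrt (2 * INR T)).
  assert (Hs2 : s * s = 2 * INR T) by (apply sqrt_sqrt; lra).
  assert (Hs : 0 < s) by (apply sqrt_lt_R0; lra).
  assert (Id1 : a * (G * D * s / 2) = 1).
  { apply sqrt_pos_eq. assert (0 < G * D) by nra. assert (0 < G * D * s / 2) by nra. nra. lra.
    replace (a * (G * D * s / 2) * (a * (G * D * s / 2))) with ((a * a) * (s * s) * (G * D)^2 / 4) by field.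
    rewrite Ha2, Hs2. field. split; lra. }
  assert (Id2 : INR T * a * G * D = s).
  { apply sqrt_pos_eq. assert (0 < G * D) by nra. assert (0 < INR T * a) by nra. nra. lra.
    replace (INR T * a * G * D * (INR T * a * G * D)) with (INR T * INR T * (a * a) * (G * D)^2) by ring.
    rewrite Ha2, Hs2. field. split; lra. }
  set (c2 := a ^ 2 * (G * D) ^ 2 / 2).
  assert (Hh : forall n, (n <= T)%nat ->
    w 1%nat k * exp (- a * sum1 n (fun t => l t k) - INR n * c2) <= w (S n) k).
  { induction n as [|n IH]; intros Hn.
    - replace (- a * sum1 0 (fun t => l t k) - INR 0 * c2) with 0 by (unfold sum1; simpl; ring).
      rewrite exp_0. lra.
    - specialize (IH ltac:(lia)).
      destruct (HW (S n) ltac:(lia)) as [Hpw Hsw].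
      pose proof (hedge_step N (w (S n)) (l (S n)) (G * D) a ltac:(nra) ltac:(lra)
        ltac:(intros; left; apply Hpw; auto) Hsw ltac:(intros; apply HLb; auto; lia) (HL0 (S n) ltac:(lia))) as HZ.
      fold c2 in HZ.
      rewrite (Hw (S n) k ltac:(lia) Hk).
      unfold l in HZ. cbv beta in HZ.
      set (Z := sum1 N (fun m => w (S n) m * exp (- a * surr d (grad (S n) (x (S n))) (x (S n)) (xe (S n) m)))) in *.
      assert (HZ0 : 0 < Z).
      { apply sum1_pos; auto. intros; apply Rmult_lt_0_compat; [apply Hpw; auto| apply exp_pos]. }
      change (surr d (grad (S n) (x (S n))) (x (S n)) (xe (S n) k)) with (l (S n) k).
      rewrite sum1_S, S_INR.
      replace (- a * (sum1 n (fun t => l t k) + l (S n) k) - (INR n + 1) * c2)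
        with ((- a * sum1 n (fun t => l t k) - INR n * c2) + (- a * l (S n) k) + - c2) by ring.
      rewrite !exp_plus, exp_Ropp.
      pose proof (exp_pos (- a * l (S n) k)). pose proof (exp_pos c2).
      assert (/ exp c2 <= / Z) by (apply Rinv_le_contravar; auto).
      set (E1 := exp (- a * sum1 n (fun t => l t k) - INR n * c2)) in *.
      set (E2 := exp (- a * l (S n) k)) in *.
      unfold Rdiv. 
      apply Rle_trans with (w (S n) k * E2 * / exp c2).
      + rewrite <- !Rmult_assoc. apply Rmult_le_compat_r. left; apply Rinv_0_lt_compat; lra.
        apply Rmult_le_compat_r; lra.
      + apply Rmult_le_compat_l; [|auto]. left. apply Rmult_lt_0_compat; [apply Hpw; lia| lra]. }
  assert (Hmeta : - sum1 T (fun t => l t k) <= G * D * s / 2 * (2 * ln (INR k + 1)) + G * D * s / 2).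
  { specialize (Hh T (le_n T)).
    destruct (HW (S T) ltac:(lia)) as [Hpw Hsw].
    assert (w (S T) k <= 1) by (rewrite <- Hsw; apply sum1_ge_term; auto; intros; left; apply Hpw; auto).
    assert (Hw1k : 0 < w 1%nat k) by (apply (HW 1%nat); lia).
    assert (ln (w 1%nat k * exp (- a * sum1 T (fun t => l t k) - INR T * c2)) <= 0).
    { rewrite <- ln_1. apply ln_le; [apply Rmult_lt_0_compat; [auto| apply exp_pos]| lra]. }
    rewrite ln_mult, ln_exp in H0 by (auto; apply exp_pos).
    assert (Hk1 : 1 <= INR k) by (apply (le_INR 1); lia).
    assert (HC : 1 <= 1 + / INR N).
    { assert (0 < INR N) by (apply (lt_INR 0); lia). assert (0 < / INR N) by (apply Rinv_0_lt_compat; lra). lra. }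
    assert (/ (INR k + 1) ^ 2 <= w 1%nat k).
    { rewrite Hw1 by auto. unfold Rdiv. 
      apply Rle_trans with (1 * / (INR k * (INR k + 1))).
      rewrite Rmult_1_l. apply Rinv_le_contravar. nra. nra.
      apply Rmult_le_compat_r. left; apply Rinv_0_lt_compat; nra. lra. }
    assert (ln (/ (INR k + 1) ^ 2) <= ln (w 1%nat k)) by (apply ln_le; auto; apply Rinv_0_lt_compat; nra).
    rewrite ln_Rinv, ln_pow in H2 by (try apply pow_lt; lra).
    assert (- sum1 T (fun t => l t k) * a <= 2 * ln (INR k + 1) + INR T * c2) by (simpl in H2; lra).
    assert (INR T * c2 = a * (G * D * s / 2)).
    { unfold c2. rewrite <- Id2. field. }
    assert (- sum1 T (fun t => l t k) * a <= (2 * ln (INR k + 1) + 1) * a * (G * D * s / 2)).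
    { replace ((2 * ln (INR k + 1) + 1) * a * (G * D * s / 2)) with (2 * ln (INR k + 1) + 1) by (rewrite Rmult_assoc, Id1; ring). lra. }
    assert (- sum1 T (fun t => l t k) <= (2 * ln (INR k + 1) + 1) * (G * D * s / 2)).
    { apply Rmult_le_reg_r with a; auto. lra. }
    lra. }
  set (b := eta D G T k).
  assert (Hb : 0 < b).
  { unfold b, eta. apply Rmult_lt_0_compat. apply Rmult_lt_0_compat. apply Rmult_lt_0_compat. apply pow_lt; lra. lra.
    apply Rinv_0_lt_compat; lra. apply sqrt_lt_R0. apply Rdiv_lt_0_compat; lra. }
  set (N2 := fun v => dot d v v).
  assert (Hstep : forall t, (1 <= t <= T)%nat ->
    dot d (g t) (vsub (xe t k) (u t)) <= (N2 (vsub (xe t k) (u t)) - N2 (vsub (xe (S t) k) (u t))) / (2 * b) + b * G^2 / 2).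
  { intros t Ht. unfold N2.
    pose proof (proj_contract d X _ _ (u t) Hcs (Hproj t k Ht Hk) (Hu t Ht)) as K.
    replace (dot d (vsub (vsub (xe t k) (vscal (eta D G T k) (grad t (x t)))) (u t))
                   (vsub (vsub (xe t k) (vscal (eta D G T k) (grad t (x t)))) (u t)))
      with (dot d (vsub (xe t k) (u t)) (vsub (xe t k) (u t)) - 2 * b * dot d (g t) (vsub (xe t k) (u t)) + b^2 * dot d (g t) (g t)) in K
      by (unfold b, g; lin).
    pose proof (norm_le_N2' d (g t) G (HGb t (x t) Ht (HXX t Ht))).
    apply Rmult_le_reg_r with (2 * b). lra. field_simplify; [|lra]. nra. }
  assert (Hshift : forall t, (1 <= t)%nat -> (S t <= T)%nat ->
    N2 (vsub (xe (S t) k) (u (S t))) - N2 (vsub (xe (S t) k) (u t)) <= 2 * D * norm d (vsub (u (S t)) (u t))).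
  { intros t Ht1 Ht2. unfold N2.
    replace (dot d (vsub (xe (S t) k) (u (S t))) (vsub (xe (S t) k) (u (S t))) - dot d (vsub (xe (S t) k) (u t)) (vsub (xe (S t) k) (u t)))
      with (dot d (vsub (u t) (u (S t))) (vsub (xe (S t) k) (u (S t))) + dot d (vsub (u t) (u (S t))) (vsub (xe (S t) k) (u t))) by lin.
    pose proof (CS d (vsub (u t) (u (S t))) (vsub (xe (S t) k) (u (S t)))).
    pose proof (CS d (vsub (u t) (u (S t))) (vsub (xe (S t) k) (u t))).
    rewrite (norm_vsub_sym d (u t)) in H, H0.
    pose proof (norm_nonneg d (vsub (u (S t)) (u t))).
    assert (X (xe (S t) k)) by (apply HXE; lia).
    pose proof (HDb _ _ H2 (Hu (S t) ltac:(lia))). pose proof (HDb _ _ H2 (Hu t ltac:(lia))).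
    nra. }
  assert (Hexp : forall n, (1 <= n <= T)%nat ->
    sum1 n (fun t => dot d (g t) (vsub (xe t k) (u t))) <=
      (N2 (vsub (xe 1%nat k) (u 1%nat)) - N2 (vsub (xe (S n) k) (u n))
        + 2 * D * rsum (n - 1) (fun j => norm d (vsub (u (j + 2)%nat) (u (j + 1)%nat)))) / (2 * b)
      + INR n * (b * G^2 / 2)).
  { intros n. induction n as [|n IH]; intros Hn. lia.
    destruct n as [|n].
    - unfold sum1. simpl rsum. pose proof (Hstep 1%nat ltac:(lia)). simpl INR. unfold Rdiv in *. lra.
    - specialize (IH ltac:(lia)). rewrite sum1_S. pose proof (Hstep (S (S n)) Hn).
      pose proof (Hshift (S n) ltac:(lia) ltac:(lia)).
      replace (S (S n) - 1)%nat with (S (S n - 1)) by lia. rewrite rsum_S.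
      replace (S n - 1 + 2)%nat with (S (S n)) by lia. replace (S n - 1 + 1)%nat with (S n) by lia.
      rewrite (S_INR (S n)).
      unfold Rdiv in *. set (ib := / (2 * b)) in *.
      assert (0 < ib) by (apply Rinv_0_lt_compat; lra).
      set (nr := norm d (vsub (u (S (S n))) (u (S n)))) in *.
      match type of H0 with ?L <= ?R => assert (L * ib <= R * ib) by (apply Rmult_le_compat_r; lra) end.
      lra. }
  assert (H1 : sum1 T (fun t => f t (x t)) - sum1 T (fun t => f t (u t)) <= sum1 T (fun t => dot d (g t) (vsub (x t) (u t)))).
  { unfold sum1. rewrite <- rsum_minus. apply rsum_le. intros i Hi.
    assert (Ht : (1 <= S i <= T)%nat) by lia.
    pose proof (first_order d X (f (S i)) (g (S i)) (x (S i)) (u (S i)) Hcs (Hconv _ Ht)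
       (proj2 (Hgrad _ _ Ht (HXX _ Ht))) (HXX _ Ht) (Hu _ Ht)).
    assert (dot d (g (S i)) (vsub (x (S i)) (u (S i))) = - dot d (g (S i)) (vsub (u (S i)) (x (S i)))) by lin.
    lra. }
  assert (H2 : sum1 T (fun t => dot d (g t) (vsub (x t) (u t))) = - sum1 T (fun t => l t k) + sum1 T (fun t => dot d (g t) (vsub (xe t k) (u t)))).
  { unfold sum1. rewrite <- rsum_opp, <- rsum_plus. apply rsum_ext. intros i Hi. unfold l, surr, g. lin. }
  pose proof (Hexp T ltac:(lia)) as H3.
  assert (H4 : rsum (T - 1) (fun j => norm d (vsub (u (j + 2)%nat) (u (j + 1)%nat))) = P) by reflexivity.
  rewrite H4 in H3.
  assert (N2 (vsub (xe 1%nat k) (u 1%nat)) <= D^2) by (apply norm_le_N2', HDb; [apply HXE; lia| apply Hu; lia]).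
  assert (0 <= N2 (vsub (xe (S T) k) (u T))) by apply N2_nonneg.
  assert (H5 : sum1 T (fun t => dot d (g t) (vsub (xe t k) (u t))) <= (D^2 + 2 * D * P) / (2 * b) + b * INR T * G^2 / 2).
  { assert (0 < / (2 * b)) by (apply Rinv_0_lt_compat; lra). unfold Rdiv in *.
    match goal with |- _ <= ?A * ?ib + _ => assert ((N2 (vsub (xe 1%nat k) (u 1%nat)) - N2 (vsub (xe (S T) k) (u T)) + 2 * D * P) * ib <= A * ib) by (apply Rmult_le_compat_r; lra) end.
    lra. }
  pose proof (expert_final (INR T) G D P (2 ^ (k - 1)) HTr HG HD HP0 ltac:(apply pow_lt; lra) (proj1 Hq) (proj2 Hq)) as H6.
  cbv zeta in H6. fold s in H6.
  replace (2 ^ (k - 1) * D / G * sqrt (7 / (2 * INR T))) with b in H6 by reflexivity.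
  lra.
Qed.
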